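(* Let $a\in\mathbb{Z}$ and $b\in\mathbb{Z}_{>0}$ be coprime with $b\not\equiv 0 \pmod 4$, let $x(1)\in\mathbb{R}$, and set $p(1)=a/b$. Define $(p(i),x(i))_{i\ge 1}$ by $$p(i+1)=p(i)-\operatorname{sgn}x(i),\qquad x(i+1)=x(i)+p(i)-\operatorname{sgn}x(i),$$ and assume $x(i)\neq 0$ for all $i\ge 1$. Then the orbit is periodic: there exists an integer $k\ge 1$ with $p(k+1)=p(1)$ and $x(k+1)=x(1)$.
   Context: Here $\operatorname{sgn}(x)=x/|x|$ for $x\neq 0$ and $\operatorname{sgn}(0)=0$. *)

(* Defs.v *)
From Stdlib Require Import Reals ZArith Znumtheory.
Open Scope R_scope.

Definition sgn (x : R) : R :=
  match Rlt_dec 0 x with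
  | left _ => 1
  | right _ => match Rlt_dec x 0 with left _ => -1 | right _ => 0 end
  end.

(* orbit p1 x1 n = (p(n+1), x(n+1)) in the paper's 1-based indexing. *)
Fixpoint orbit (p1 x1 : R) (n : nat) : R * R :=
  match n with
  | O => (p1, x1)
  | S m => let '(p, x) := orbit p1 x1 m in
           (p - sgn x, x + p - sgn x)
  end.

(* Main.v *)
Require Import Defs.
From Stdlib Require Import Reals ZArith Znumtheory.
From Stdlib Require Import Classical Lia Lra Psatz List Permutation.
Import ListNotations.
Open Scope R_scope.

Open Scope Z_scope.

Open Scope Z_scope.

Fixpoint zs (F : Z -> Z) (n : nat) : Z :=
  match n with O => 0 | S n' => zs F n' + F (Z.of_nat n') end.

Definition lsum (l : list Z) : Z := fold_right Z.add 0 l.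

Lemma lsum_app l1 l2 : lsum (l1 ++ l2) = lsum l1 + lsum l2.
Proof. induction l1; simpl; [lia| unfold lsum in *; simpl; rewrite IHl1; lia]. Qed.

Lemma zs_list F n : zs F n = lsum (map F (map Z.of_nat (seq 0 n))).
Proof.
  induction n; [reflexivity|].
  cbn [zs]. rewrite seq_S, !map_app, lsum_app, IHn. unfold lsum at 3. simpl. lia.
Qed.

Lemma lsum_perm l l' : Permutation l l' -> lsum l = lsum l'.
Proof. induction 1; unfold lsum in *; simpl; lia. Qed.

Lemma zs_ext F G n : (forall s, (s < n)%nat -> F (Z.of_nat s) = G (Z.of_nat s)) -> zs F n = zs G n.
Proof. induction n; intros H; simpl; auto. rewrite IHn, H; auto. Qed.

Lemma NoDup_map_inj {A B} (f : A -> B) l :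
  (forall x y, In x l -> In y l -> f x = f y -> x = y) -> NoDup l -> NoDup (map f l).
Proof.
  induction l as [|a l IH]; intros Hi Hn; simpl; constructor.
  - inversion Hn; subst. intro Hin. apply in_map_iff in Hin as [y [Hy Hy']].
    assert (y = a) by (apply Hi; simpl; auto). subst. contradiction.
  - inversion Hn; subst. apply IH; auto. intros; apply Hi; simpl; auto.
Qed.

Lemma zs_telescope f n : zs (fun i => f (i+1) - f i) n = f (Z.of_nat n) - f 0.
Proof. induction n; [simpl; lia|]. cbn [zs]. rewrite IHn, Nat2Z.inj_succ. unfold Z.succ. lia. Qed.

Lemma zs_add F G n : zs (fun s => F s + G s) n = zs F n + zs G n.
Proof. induction n; simpl; lia. Qed.
Lemma zs_scal c F n : zs (fun s => c * F s) n = c * zs F n.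
Proof. induction n; simpl; lia. Qed.
Lemma zs_lin a b F G n : zs (fun s => a * F s - b * G s) n = a * zs F n - b * zs G n.
Proof. induction n; simpl; lia. Qed.
Lemma zs_const c n : zs (fun _ => c) n = c * Z.of_nat n.
Proof. induction n; simpl; lia. Qed.

Section Reindex.
Variable q : Z.
Hypothesis Hq : 0 < q.

Lemma reindex F c k u v :
  (forall x, F x = F (x mod q)) -> u * k + v * q = 1 ->
  zs (fun s => F (c + k * s)) (Z.to_nat q) = zs F (Z.to_nat q).
Proof.
  intros HF Hb.
  rewrite !zs_list.
  set (L := map Z.of_nat (seq 0 (Z.to_nat q))).
  assert (HL : forall z, In z L <-> 0 <= z < q).
  { intro z; unfold L; rewrite in_map_iff; split.
    - intros [n [<- Hn]]. apply in_seq in Hn. lia.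
    - intros Hz. exists (Z.to_nat z). rewrite in_seq. split; lia. }
  replace (map (fun s => F (c + k * s)) L) with (map F (map (fun s => (c + k*s) mod q) L)).
  2:{ rewrite map_map. apply map_ext. intros; symmetry; apply HF. }
  apply lsum_perm, Permutation_map.
  apply NoDup_Permutation_bis.
  - apply NoDup_map_inj.
    + intros x y Hx Hy Hxy. apply HL in Hx; apply HL in Hy.
      assert (Hd : (q | k * (x - y))).
      { assert (E1 := Z.div_mod (c + k*x) q ltac:(lia)).
        assert (E2 := Z.div_mod (c + k*y) q ltac:(lia)).
        exists ((c+k*x)/q - (c+k*y)/q). rewrite Z.mul_sub_distr_r, Z.mul_sub_distr_l.
        rewrite (Z.mul_comm ((c + k * x) / q)), (Z.mul_comm ((c + k * y) / q)). lia. }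
      assert (Hd2 : (q | x - y)).
      { destruct Hd as [m Hm]. exists (u*m + v*(x-y)).
        replace (x - y) with ((u*k + v*q)*(x-y)) at 1 by (rewrite Hb; lia).
        rewrite Z.mul_add_distr_r. rewrite <- Z.mul_assoc, Hm. ring. }
      destruct Hd2 as [m Hm]. destruct (Z.lt_trichotomy m 0) as [Hm0|[Hm0|Hm0]]; [nia| subst; lia |nia].
    + unfold L. apply NoDup_map_inj. intros; lia. apply seq_NoDup.
  - rewrite !length_map. lia.
  - intros z Hz. apply in_map_iff in Hz as [s [<- _]]. apply HL.
    apply Z.mod_pos_bound; lia.
Qed.
End Reindex.

Lemma php_nat (M : nat) : forall (g : nat -> nat), (forall i, (i <= M)%nat -> (g i < M)%nat) ->
  exists i j, (i < j <= M)%nat /\ g i = g j.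
Proof.
  induction M; intros g Hg.
  - specialize (Hg 0%nat (le_n 0)). lia.
  - destruct (classic (exists i, (i <= M)%nat /\ g i = g (S M))) as [[i [Hi Heq]]|Hno].
    + exists i, (S M). split; [lia|auto].
    + set (h := fun i => if Nat.ltb (g i) (g (S M)) then g i else (g i - 1)%nat).
      destruct (IHM h) as [i [j [Hij Hh]]].
      * intros i Hi. unfold h. pose proof (Hg i ltac:(lia)). pose proof (Hg (S M) (le_n _)).
        assert (g i <> g (S M)) by (intro E; apply Hno; exists i; split; auto).
        destruct (Nat.ltb_spec (g i) (g (S M))); lia.
      * exists i, j. split; [lia|].
        unfold h in Hh.
        assert (g i <> g (S M)) by (intro E; apply Hno; exists i; split; [lia|auto]).
        assert (g j <> g (S M)) by (intro E; apply Hno; exists j; split; [lia|auto]).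
        destruct (Nat.ltb_spec (g i) (g (S M))), (Nat.ltb_spec (g j) (g (S M))); lia.
Qed.

Lemma div_pair x1 y1 x2 y2 m : 0 <= y1 < m -> 0 <= y2 < m -> x1*m + y1 = x2*m + y2 -> x1 = x2 /\ y1 = y2.
Proof.
  intros H1 H2 E. destruct (Z.lt_trichotomy x1 x2) as [L|[L|L]].
  - exfalso. assert (x1*m + m <= x2*m) by nia. lia.
  - subst. lia.
  - exfalso. assert (x2*m + m <= x1*m) by nia. lia.
Qed.

Open Scope Z_scope.

Lemma IZR_sq z : IZR (z^2) = (IZR z ^ 2)%R.
Proof. replace (z^2) with (z*z) by ring. rewrite mult_IZR. ring. Qed.

Lemma div_eq_k q k mu : 0 < q -> q*k <= mu <= q*k + q - 1 -> mu / q = k.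
Proof.
  intros Hq H. symmetry. apply (Z.div_unique mu q k (mu - q*k)); lia.
Qed.


Section Slots.
Variables q r u v : Z.
Hypothesis Hq : 0 < q.
Hypothesis Hr : 0 <= r < 2*q.
Hypothesis Hb : u*(2*r) + v*q = 1.

Definition psi (y : Z) : Z := (y mod q) * (q - y mod q).
Definition delta (z : Z) : Z := 2 * psi (r - z) - 2 * psi z.
Definition tt (x : Z) : Z := ((-x) * u) mod q.
Definition G (n : nat) : Z := zs (fun s => delta ((-2*r) * s)) n.
Definition gam (x : Z) : Z := G (Z.to_nat (tt x)).

Lemma psi_per x m : psi (x + m*q) = psi x.
Proof. unfold psi. rewrite Z.mod_add; lia. Qed.

Lemma psi_mod x : psi (x mod q) = psi x.
Proof. unfold psi. rewrite Z.mod_mod; lia. Qed.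

Lemma psi_even x : psi (-x) = psi x.
Proof.
  unfold psi. destruct (Z.eq_dec (x mod q) 0) as [H|H].
  - rewrite Z.mod_opp_l_z; lia.
  - rewrite Z.mod_opp_l_nz; lia.
Qed.

Lemma psi_bound x : 0 <= psi x <= q*q.
Proof. unfold psi. pose proof (Z.mod_pos_bound x q Hq). nia. Qed.

Lemma psi_range l : 0 <= l <= q -> psi l = l*(q-l).
Proof.
  intros H. destruct (Z.eq_dec l q).
  - subst. unfold psi. rewrite Z.mod_same; lia.
  - unfold psi. rewrite Z.mod_small; lia.
Qed.

Lemma delta_per x m : delta (x + m*q) = delta x.
Proof.
  unfold delta. rewrite psi_per. replace (r - (x + m*q)) with ((r - x) + (-m)*q) by ring.
  rewrite psi_per. reflexivity.
Qed.

Lemma delta_mod x : delta (x mod q) = delta x.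
Proof.
  rewrite (Z.div_mod x q) at 2 by lia.
  replace (q * (x / q) + x mod q) with (x mod q + (x/q)*q) by ring.
  rewrite delta_per. reflexivity.
Qed.

Lemma tt_range x : 0 <= tt x < q.
Proof. unfold tt. apply Z.mod_pos_bound; lia. Qed.

Lemma tt_div x : (q | x + 2*r*tt x).
Proof.
  unfold tt. rewrite Z.mod_eq by lia.
  exists (x*v - 2*r*((-x*u)/q)).
  replace x with (x*(u*(2*r) + v*q)) at 1 by (rewrite Hb; ring). ring.
Qed.

Lemma tt_unique x t : 0 <= t < q -> (q | x + 2*r*t) -> t = tt x.
Proof.
  intros Ht Hd. pose proof (tt_div x) as Hd'. pose proof (tt_range x).
  destruct Hd as [m1 H1], Hd' as [m2 H2].
  assert (Hd : (q | t - tt x)).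
  { exists (u*(m1 - m2) + v*(t - tt x)).
    assert (E : 2*r*(t - tt x) = (m1 - m2)*q) by lia.
    transitivity ((t - tt x)*(u*(2*r) + v*q)); [rewrite Hb; ring|].
    transitivity (u*(2*r*(t - tt x)) + v*q*(t - tt x)); [ring|]. rewrite E. ring. }
  destruct Hd as [m Hm]. destruct (Z.lt_trichotomy m 0) as [Hm0|[Hm0|Hm0]]; [nia|subst; lia|nia].
Qed.

Lemma tt_per x m : tt (x + m*q) = tt x.
Proof.
  symmetry. apply tt_unique. apply tt_range.
  destruct (tt_div x) as [k Hk]. exists (k + m). nia.
Qed.

Lemma gam_per x m : gam (x + m*q) = gam x.
Proof. unfold gam. rewrite tt_per. reflexivity. Qed.

Lemma Gq : G (Z.to_nat q) = 0.
Proof.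
  unfold G.
  assert (E : zs (fun s => delta ((-2*r)*s)) (Z.to_nat q) = zs delta (Z.to_nat q)).
  { rewrite <- (reindex q Hq delta 0 (-2*r) (-u) v).
    - apply zs_ext. intros; f_equal; ring.
    - intros; symmetry; apply delta_mod.
    - lia. }
  rewrite E. unfold delta.
  assert (E2 : zs (fun z => 2 * psi (r - z) - 2 * psi z) (Z.to_nat q)
              = 2 * zs (fun z => psi (r + (-1)*z)) (Z.to_nat q) - 2 * zs psi (Z.to_nat q)).
  { rewrite <- zs_lin. apply zs_ext. intros. replace (r + -1 * Z.of_nat s) with (r - Z.of_nat s) by ring. lia. }
  rewrite E2. rewrite (reindex q Hq psi r (-1) (-1) 0).
  - ring.
  - intros; symmetry; apply psi_mod.
  - ring.
Qed.

Lemma G_S n : G (S n) = G n + delta ((-2*r) * Z.of_nat n).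
Proof. reflexivity. Qed.

Lemma gam_step x : gam (x - 2*r) = gam x + delta x.
Proof.
  pose proof (tt_range x) as Ht. destruct (tt_div x) as [m Hm].
  assert (Hdx : delta x = delta ((-2*r) * tt x)).
  { replace x with ((-2*r) * tt x + m*q) at 1 by lia. apply delta_per. }
  unfold gam. destruct (Z.eq_dec (tt x + 1) q) as [E|E].
  - assert (E0 : tt (x - 2*r) = 0).
    { symmetry; apply tt_unique; [lia|]. exists (m - 2*r). nia. }
    rewrite E0, Hdx. change (G (Z.to_nat 0)) with 0. rewrite <- Gq.
    replace (Z.to_nat q) with (S (Z.to_nat (tt x))) by lia. rewrite G_S, Z2Nat.id by lia. reflexivity.
  - assert (E1 : tt (x - 2*r) = tt x + 1).
    { symmetry; apply tt_unique; [lia|]. exists m. nia. }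
    rewrite E1. replace (Z.to_nat (tt x + 1)) with (S (Z.to_nat (tt x))) by lia.
    rewrite G_S, Hdx. rewrite Z2Nat.id by lia. reflexivity.
Qed.

Lemma tt0 : tt 0 = 0.
Proof. symmetry; apply tt_unique; [lia|]. exists 0; ring. Qed.

Lemma gam0 : gam 0 = 0.
Proof. unfold gam. rewrite tt0. reflexivity. Qed.

Lemma gamP x : gam x + gam (-x) = 2 * psi x.
Proof.
  set (D := fun y => gam y + gam (-y) - 2 * psi y).
  assert (Dstep : forall y, D (y - 2*r) = D y).
  { intro y. unfold D.
    pose proof (gam_step y) as S1. pose proof (gam_step (2*r - y)) as S2.
    replace (2*r - y - 2*r) with (-y) in S2 by ring.
    replace (- (y - 2*r)) with (2*r - y) by ring.
    unfold delta in *.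
    replace (r - (2*r - y)) with (-(r - y)) in S2 by ring. rewrite psi_even in S2.
    assert (psi (y - 2*r) = psi (2*r - y)) by (rewrite <- psi_even; f_equal; ring).
    lia. }
  assert (Dper : forall y m, D (y + m*q) = D y).
  { intros y m. unfold D. rewrite gam_per, psi_per.
    replace (- (y + m*q)) with (-y + (-m)*q) by ring. rewrite gam_per. reflexivity. }
  assert (Dn : forall n : nat, D ((-2*r) * Z.of_nat n) = 0).
  { induction n.
    - unfold D. replace (-2*r * Z.of_nat 0) with 0 by (simpl; ring). replace (-0) with 0 by ring.
      rewrite gam0. unfold psi. rewrite Z.mod_0_l by lia. ring.
    - rewrite Nat2Z.inj_succ. replace (-2*r * Z.succ (Z.of_nat n)) with (-2*r*Z.of_nat n - 2*r) by ring.
      rewrite Dstep. auto. }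
  destruct (tt_div x) as [m Hm]. pose proof (tt_range x).
  assert (D x = 0).
  { replace x with ((-2*r) * Z.of_nat (Z.to_nat (tt x)) + m*q) by (rewrite Z2Nat.id; lia).
    rewrite Dper. apply Dn. }
  unfold D in H0. lia.
Qed.

Lemma gamQ y : gam y + gam (-2*r - y) = 2 * psi (y + r).
Proof.
  replace (-2*r - y) with (-y - 2*r) by ring. rewrite gam_step.
  pose proof (gamP y). unfold delta. replace (r - - y) with (y + r) by ring.
  rewrite psi_even. lia.
Qed.

Lemma gam_mr : gam (-r) = 0.
Proof. pose proof (gamQ (-r)). replace (-2*r - - r) with (-r) in H by ring.
  replace (-r + r) with 0 in H by ring. unfold psi in H. rewrite Z.mod_0_l in H by lia. lia. Qed.

Lemma G_bound n : Z.abs (G n) <= 2*q*q * Z.of_nat n.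
Proof.
  induction n; [simpl; lia|]. rewrite G_S, Nat2Z.inj_succ.
  assert (Z.abs (delta ((-2*r) * Z.of_nat n)) <= 2*q*q).
  { unfold delta. pose proof (psi_bound (r - (-2*r)*Z.of_nat n)). pose proof (psi_bound ((-2*r)*Z.of_nat n)). lia. }
  lia.
Qed.

Lemma gam_bound x : Z.abs (gam x) <= 2*q*q*q.
Proof.
  unfold gam. pose proof (G_bound (Z.to_nat (tt x))). pose proof (tt_range x).
  rewrite Z2Nat.id in H by lia. nia.
Qed.


Definition rhoP (mu : Z) : Z := 2*q*(mu/q) + q - 1 - mu.
Definition rhoQ (mu : Z) : Z := 2*(q*((mu + r)/q) - r) + q - 1 - mu.
Definition sig (mu : Z) : Z := rhoQ (rhoP mu).
Definition dd (j : Z) : Z := -2*r + 2*q*((q - 1 - j + r)/q).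

Lemma sig_eq mu : sig mu = mu + dd (mu mod q).
Proof.
  unfold sig, rhoQ, rhoP, dd.
  pose proof (Z.div_mod mu q ltac:(lia)) as E.
  set (k := mu / q) in *. set (j := mu mod q) in *.
  replace (2 * q * k + q - 1 - mu + r) with ((q - 1 - j + r) + k*q) by lia.
  rewrite Z.div_add by lia. lia.
Qed.

Lemma dd_bound j : 0 <= j < q -> Z.abs (dd j) <= 4*q.
Proof.
  intros Hj. unfold dd.
  assert (0 <= (q - 1 - j + r) / q <= 2).
  { split. apply Z.div_pos; lia. assert ((q - 1 - j + r) / q < 3) by (apply Z.div_lt_upper_bound; lia). lia. }
  nia.
Qed.

Lemma iter_sig_form n mu : exists m, Nat.iter n sig mu = mu + (-2*r) * Z.of_nat n + m*q.
Proof.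
  induction n.
  - exists 0. simpl. ring.
  - destruct IHn as [m Hm]. simpl Nat.iter. rewrite sig_eq, Hm.
    exists (m + (q - 1 - (mu + -2 * r * Z.of_nat n + m * q) mod q + r) / q * 2).
    unfold dd. rewrite Nat2Z.inj_succ. lia.
Qed.

Lemma iter_sig_sum n mu :
  Nat.iter n sig mu = mu + zs (fun s => dd ((mu + (-2*r)*s) mod q)) n.
Proof.
  induction n.
  - simpl. ring.
  - simpl Nat.iter. rewrite sig_eq. cbn [zs].
    destruct (iter_sig_form n mu) as [m Hm].
    assert (E : Nat.iter n sig mu mod q = (mu + -2*r*Z.of_nat n) mod q).
    { rewrite Hm. rewrite Z.mod_add; lia. }
    rewrite E, IHn. ring.
Qed.

Lemma zs_div0 : zs (fun i => i / q) (Z.to_nat q) = 0.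
Proof.
  rewrite (zs_ext _ (fun _ => 0)). rewrite zs_const. ring.
  intros s Hs. apply Z.div_small. lia.
Qed.

Lemma hermite (n : nat) : zs (fun i => (i + Z.of_nat n) / q) (Z.to_nat q) = Z.of_nat n.
Proof.
  induction n.
  - change (Z.of_nat 0) with 0. rewrite (zs_ext _ (fun i => i / q)). apply zs_div0. intros; cbv beta; rewrite Z.add_0_r; reflexivity.
  - set (f := fun i => (i + Z.of_nat n) / q).
    rewrite (zs_ext _ (fun i => f i + (f (i+1) - f i))).
    2:{ intros s Hs. unfold f. rewrite Nat2Z.inj_succ. cbv beta.
        replace (Z.of_nat s + 1 + Z.of_nat n) with (Z.of_nat s + Z.succ (Z.of_nat n)) by lia. ring. }
    rewrite zs_add. unfold f at 1. rewrite IHn.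
    rewrite zs_telescope. unfold f. rewrite Z2Nat.id by lia.
    replace (q + Z.of_nat n) with (Z.of_nat n + 1*q) by ring.
    rewrite Z.div_add by lia. simpl. lia.
Qed.

Lemma sum_F' : zs (fun j => (q - 1 - j + r)/q) (Z.to_nat q) = r.
Proof.
  set (H := fun x => ((x mod q) + r)/q).
  transitivity (zs (fun s => H (q - 1 + (-1)*s)) (Z.to_nat q)).
  { apply zs_ext. intros s Hs. unfold H. rewrite Z.mod_small by lia. f_equal; ring. }
  rewrite (reindex q Hq H (q-1) (-1) (-1) 0).
  2: intros; unfold H; rewrite Z.mod_mod by lia; reflexivity.
  2: ring.
  transitivity (zs (fun i => (i + Z.of_nat (Z.to_nat r))/q) (Z.to_nat q)).
  { apply zs_ext. intros s Hs. unfold H. rewrite Z.mod_small by lia. rewrite Z2Nat.id by lia. reflexivity. }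
  rewrite hermite. apply Z2Nat.id; lia.
Qed.

Lemma sum_dd : zs dd (Z.to_nat q) = 0.
Proof.
  unfold dd.
  rewrite (zs_ext _ (fun j => (2*q) * ((q - 1 - j + r)/q) - (2*r) * 1)).
  2:{ intros; ring. }
  rewrite zs_lin, sum_F', zs_const. rewrite Z2Nat.id by lia. ring.
Qed.

Lemma iter_q mu : Nat.iter (Z.to_nat q) sig mu = mu.
Proof.
  rewrite iter_sig_sum.
  rewrite (reindex q Hq (fun x => dd (x mod q)) mu (-2*r) (-u) v).
  2: intros; rewrite Z.mod_mod by lia; reflexivity.
  2: lia.
  rewrite (zs_ext _ dd). rewrite sum_dd. ring.
  intros s Hs. rewrite Z.mod_small by lia. reflexivity.
Qed.

Lemma iter_bound_lin n mu : Z.abs (Nat.iter n sig mu - mu) <= 4*q*Z.of_nat n.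
Proof.
  induction n.
  - simpl. lia.
  - simpl Nat.iter. rewrite sig_eq. rewrite Nat2Z.inj_succ.
    pose proof (dd_bound (Nat.iter n sig mu mod q) (Z.mod_pos_bound _ _ Hq)). lia.
Qed.

Lemma iter_mod k s mu : Nat.iter (k * Z.to_nat q + s) sig mu = Nat.iter s sig mu.
Proof.
  induction k.
  - reflexivity.
  - replace (S k * Z.to_nat q + s)%nat with (Z.to_nat q + (k * Z.to_nat q + s))%nat by lia.
    rewrite Nat.iter_add, IHk. apply iter_q.
Qed.

Lemma iter_bound n mu : Z.abs (Nat.iter n sig mu - mu) <= 4*q*q.
Proof.
  rewrite (Nat.div_mod n (Z.to_nat q)) by lia.
  rewrite Nat.mul_comm, iter_mod.
  pose proof (iter_bound_lin (n mod Z.to_nat q) mu).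
  pose proof (Nat.mod_upper_bound n (Z.to_nat q) ltac:(lia)).
  assert (Z.of_nat (n mod Z.to_nat q) <= q) by lia. nia.
Qed.

Lemma rhoP_inv mu : rhoP (rhoP mu) = mu.
Proof.
  unfold rhoP. pose proof (Z.div_mod mu q ltac:(lia)). pose proof (Z.mod_pos_bound mu q Hq).
  set (k := mu / q) in *.
  replace (2 * q * k + q - 1 - mu) with ((q - 1 - mu mod q) + k*q) by lia.
  rewrite Z.div_add by lia. rewrite Z.div_small by lia. lia.
Qed.

Lemma rhoP_bound mu : mu - q < rhoP mu < mu + q.
Proof.
  unfold rhoP. pose proof (Z.div_mod mu q ltac:(lia)). pose proof (Z.mod_pos_bound mu q Hq). lia.
Qed.

Definition xi (mu : Z) : Z := (r + 2*mu)^2 + 4 * gam mu.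

Definition M0 : Z := 2*q*q*q.

Lemma xi_step mu : M0 <= mu -> xi mu < xi (mu + 1).
Proof.
  unfold xi, M0. intros H. pose proof (gam_bound mu). pose proof (gam_bound (mu+1)). nia.
Qed.

Lemma xi_mono mu1 mu2 : M0 <= mu1 -> mu1 <= mu2 -> xi mu1 <= xi mu2.
Proof.
  intros H1 H2. replace mu2 with (mu1 + Z.of_nat (Z.to_nat (mu2 - mu1))) by lia.
  induction (Z.to_nat (mu2 - mu1)).
  - change (Z.of_nat 0) with 0. rewrite Z.add_0_r. lia.
  - rewrite Nat2Z.inj_succ. pose proof (xi_step (mu1 + Z.of_nat n) ltac:(lia)).
    replace (mu1 + Z.succ (Z.of_nat n)) with (mu1 + Z.of_nat n + 1) by lia. lia.
Qed.

Lemma xi_lower mu : 0 <= mu -> 4*mu*mu - 8*q*q*q <= xi mu.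
Proof. intros. unfold xi. pose proof (gam_bound mu). nia. Qed.

Lemma xi_upper mu : 0 <= mu -> xi mu <= (r + 2*mu)^2 + 8*q*q*q.
Proof. intros. unfold xi. pose proof (gam_bound mu). nia. Qed.

Lemma xi_refl beta l :
  gam (beta + l) + gam (beta + q - l) = 2*l*(q-l) ->
  (r + 2*beta)^2 + (r + 2*beta + 2*q)^2 - xi (beta + l) = xi (beta + q - l).
Proof. intros H. unfold xi. nia. Qed.

Lemma reflP k l : 0 <= l <= q -> gam (q*k + l) + gam (q*k + q - l) = 2*l*(q-l).
Proof.
  intros Hl. replace (q*k + l) with (l + k*q) by ring. replace (q*k + q - l) with (-l + (k+1)*q) by ring.
  rewrite !gam_per, gamP, psi_range by lia. ring.
Qed.

Lemma reflQ k l : 0 <= l <= q -> gam (q*k - r + l) + gam (q*k - r + q - l) = 2*l*(q-l).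
Proof.
  intros Hl. replace (q*k - r + l) with ((-r + l) + k*q) by ring.
  replace (q*k - r + q - l) with ((-2*r - (-r + l)) + (k+1)*q) by ring.
  rewrite !gam_per, gamQ. replace (-r + l + r) with l by ring. rewrite psi_range by lia. ring.
Qed.

Local Notation XI := xi.
Local Notation GM := gam.

Definition Mbig : Z := q + 6*q*q*q.

Definition InSlot (N : R) (mu : Z) : Prop := (IZR (XI mu) <= N <= IZR (XI (mu + 1)))%R.

Lemma cross (mu beta : Z) (N : R) :
  Mbig <= mu -> GM beta = 0 -> GM (beta + q) = 0 ->
  (forall l, 0 <= l <= q -> GM (beta + l) + GM (beta + q - l) = 2*l*(q-l)) ->
  0 < r + 2*beta + 2*q ->
  (IZR ((r + 2*beta)^2) < N < IZR ((r + 2*beta + 2*q)^2))%R -> InSlot N mu ->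
  beta <= mu <= beta + q - 1 /\
  InSlot (IZR ((r + 2*beta)^2 + (r + 2*beta + 2*q)^2) - N)%R (2*beta + q - 1 - mu).
Proof.
  intros Hmu Hg0 Hgq Hrefl Hpos [HN1 HN2] [Hs1 Hs2].
  assert (HM0 : M0 <= mu) by (unfold Mbig, M0 in *; nia).
  assert (Xb : XI beta = (r + 2*beta)^2) by (unfold xi; rewrite Hg0; ring).
  assert (Xbq : XI (beta + q) = (r + 2*beta + 2*q)^2) by (unfold xi; rewrite Hgq; ring).
  assert (Hlow : beta <= mu).
  { destruct (Z.le_gt_cases beta mu) as [H|H]; auto. exfalso.
    assert (XI (mu + 1) <= XI beta) by (apply xi_mono; auto; lia).
    apply IZR_le in H0. rewrite Xb in H0. lra. }
  assert (Hup : mu <= beta + q - 1).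
  { destruct (Z.le_gt_cases mu (beta + q - 1)) as [H|H]; auto. exfalso.
    destruct (Z.le_gt_cases (M0) (beta + q)) as [H2|H2].
    - assert (XI (beta + q) <= XI mu) by (apply xi_mono; auto; lia).
      apply IZR_le in H0. rewrite Xbq in H0. lra.
    - assert (H3 : (r + 2*beta + 2*q)^2 < XI mu).
      { pose proof (xi_lower mu ltac:(unfold Mbig in *; nia)).
        unfold Mbig, M0 in *. nia. }
      apply IZR_lt in H3. lra. }
  split; [lia|].
  set (l := mu - beta).
  pose proof (xi_refl beta l (Hrefl l ltac:(unfold l; lia))) as E1.
  pose proof (xi_refl beta (l+1) (Hrefl (l+1) ltac:(unfold l; lia))) as E2.
  replace (beta + l) with mu in E1 by (unfold l; ring).
  replace (beta + q - l) with (2*beta + q - 1 - mu + 1) in E1 by (unfold l; ring).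
  replace (beta + (l+1)) with (mu + 1) in E2 by (unfold l; ring).
  replace (beta + q - (l+1)) with (2*beta + q - 1 - mu) in E2 by (unfold l; ring).
  unfold InSlot. rewrite <- E1, <- E2. rewrite !minus_IZR. lra.
Qed.



Definition Orb (mu0 mu : Z) : Prop := exists t : nat, mu = Nat.iter t sig mu0.

Variables a b c kap : Z.
Variable x1 : R.
Hypothesis Hbpos : 0 < b.
Hypothesis Hcb : 2*q = c*b.
Hypothesis Hk : q - c*a = r + 2*q*kap.

Definition pp : R := (IZR a / IZR b)%R.

Definition sgnZ (x : R) : Z :=
  if Rlt_dec 0 x then 1 else if Rlt_dec x 0 then -1 else 0.

Lemma sgn_sgnZ x : sgn x = IZR (sgnZ x).
Proof. unfold sgn, sgnZ. destruct (Rlt_dec 0 x); [reflexivity|]. destruct (Rlt_dec x 0); reflexivity. Qed.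

Fixpoint zorb (n : nat) : Z * Z :=
  match n with
  | O => (0, 0)
  | S m => let '(P, Y) := zorb m in
           let s := sgnZ (x1 + IZR Y / IZR b)%R in (P - s, Y + a + b*(P - s))
  end.

Lemma IZRb_nz : IZR b <> 0%R.
Proof. apply not_0_IZR. lia. Qed.

Lemma orbit_zorb n :
  orbit pp x1 n = ((pp + IZR (fst (zorb n)))%R, (x1 + IZR (snd (zorb n)) / IZR b)%R).
Proof.
  pose proof IZRb_nz as Hb0.
  induction n.
  - simpl. f_equal; unfold Rdiv; rewrite ?Rmult_0_l; ring.
  - simpl orbit. rewrite IHn. simpl zorb. destruct (zorb n) as [P Y]. simpl fst; simpl snd.
    rewrite sgn_sgnZ. f_equal.
    + rewrite minus_IZR. ring.
    + rewrite !plus_IZR, mult_IZR, minus_IZR. unfold pp. field. auto.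
Qed.

Definition Npos (p x : R) : R := (8 * (IZR q)^2 * x + (IZR q * (1 - 2*p))^2)%R.
Definition Nneg (p x : R) : R := (- 8 * (IZR q)^2 * x + (IZR q * (2*p + 1))^2)%R.

Definition GoodS (mu0 : Z) (p x : R) : Prop :=
  ((0 < x)%R /\ exists mu, Orb mu0 mu /\ InSlot (Npos p x) mu) \/
  ((x < 0)%R /\ exists mu, Orb mu0 mu /\ InSlot (Nneg p x) (rhoP mu)).

Lemma HQb : (2 * IZR q = IZR c * IZR b)%R.
Proof. pose proof (f_equal IZR Hcb) as H. rewrite !mult_IZR in H. exact H. Qed.

Lemma AP_int P : (IZR q * (1 - 2*(pp + IZR P)))%R = IZR (r + 2*(q*(kap - P))).
Proof.
  replace (r + 2*(q*(kap - P))) with (q - c*a - 2*q*P) by lia.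
  rewrite !minus_IZR, !mult_IZR. unfold pp.
  pose proof IZRb_nz. pose proof HQb.
  replace (IZR c) with (2 * IZR q / IZR b)%R by (rewrite H0; field; auto).
  field. auto.
Qed.

Lemma AQ_int P : (IZR q * (2*(pp + IZR P) + 1))%R = IZR (r + 2*(q*(1 + P - kap) - r)).
Proof.
  replace (r + 2*(q*(1 + P - kap) - r)) with (c*a + 2*q*P + q) by lia.
  rewrite !plus_IZR, !mult_IZR. unfold pp.
  pose proof IZRb_nz. pose proof HQb.
  replace (IZR c) with (2 * IZR q / IZR b)%R by (rewrite H0; field; auto).
  field. auto.
Qed.

Lemma Qpos : (1 <= IZR q)%R.
Proof. apply IZR_le. lia. Qed.

Lemma good_step mu0 P x :
  (forall mu, Orb mu0 mu -> Mbig + q <= mu) ->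
  let p := (pp + IZR P)%R in
  x <> 0%R -> (x + p - sgn x <> 0)%R ->
  GoodS mu0 p x -> GoodS mu0 (p - sgn x)%R (x + p - sgn x)%R.
Proof.
  intros Horb p Hx Hx' HG. pose proof Qpos as HQ.
  destruct HG as [[Hpos [mu [Ho Hs]]] | [Hneg [mu [Ho Hs]]]].
  -
    assert (Hsg : sgn x = 1%R) by (unfold sgn; destruct (Rlt_dec 0 x); [reflexivity|lra]).
    rewrite Hsg in *.
    destruct (Rlt_dec (x + p - 1) 0) as [Hc|Hc].
    +
      right. split; [exact Hc|]. exists mu. split; [exact Ho|].
      pose proof (Horb mu Ho) as Hmu.
      set (beta := q*(kap - P)).
      assert (HA : (IZR q * (1 - 2*p))%R = IZR (r + 2*beta)) by (unfold p, beta; apply AP_int).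
      assert (HA2 : IZR (r + 2*beta + 2*q) = (IZR q * (1 - 2*p) + 2 * IZR q)%R)
        by (rewrite HA, plus_IZR, mult_IZR; reflexivity).
      destruct (cross mu beta (Npos p x)) as [[Hb1 Hb2] Hs'].
      * lia.
      * unfold beta. replace (q*(kap-P)) with (0 + (kap-P)*q) by ring. rewrite gam_per. apply gam0.
      * unfold beta. replace (q*(kap-P) + q) with (0 + (kap-P+1)*q) by ring. rewrite gam_per. apply gam0.
      * intros l Hl. unfold beta. apply reflP. lia.
      * apply lt_IZR. rewrite HA2. nra.
      * rewrite !IZR_sq, HA2, <- HA. unfold Npos.
        assert (0 < IZR q ^ 2 * (1 - p - x))%R by (apply Rmult_lt_0_compat; nra). split; nra.
      * exact Hs.
      * assert (E : rhoP mu = 2*beta + q - 1 - mu).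
        { unfold rhoP. rewrite (div_eq_k q (kap - P) mu) by (unfold beta in *; lia). unfold beta. ring. }
        rewrite E.
        replace (Nneg (p - 1) (x + p - 1)) with (IZR ((r + 2*beta)^2 + (r + 2*beta + 2*q)^2) - Npos p x)%R.
        exact Hs'.
        rewrite plus_IZR, !IZR_sq, HA2, <- HA. unfold Npos, Nneg. ring.
    + left. split; [lra|]. exists mu. split; [exact Ho|].
      replace (Npos (p - 1) (x + p - 1)) with (Npos p x) by (unfold Npos; ring). exact Hs.
  -
    assert (Hsg : sgn x = (-1)%R) by (unfold sgn; destruct (Rlt_dec 0 x); [lra|]; destruct (Rlt_dec x 0); [reflexivity|lra]).
    rewrite Hsg in *.
    destruct (Rlt_dec 0 (x + p - -1)) as [Hc|Hc].
    + left. split; [exact Hc|]. exists (sig mu). split.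
      { destruct Ho as [t Ht]. exists (S t). simpl. rewrite Ht. reflexivity. }
      pose proof (Horb mu Ho) as Hmu. pose proof (rhoP_bound mu) as Hrb.
      set (nu := rhoP mu) in *.
      set (beta := q*(1 + P - kap) - r).
      assert (HA : (IZR q * (2*p + 1))%R = IZR (r + 2*beta)) by (unfold p, beta; apply AQ_int).
      assert (HA2 : IZR (r + 2*beta + 2*q) = (IZR q * (2*p + 1) + 2 * IZR q)%R)
        by (rewrite HA, plus_IZR, mult_IZR; reflexivity).
      destruct (cross nu beta (Nneg p x)) as [[Hb1 Hb2] Hs'].
      * lia.
      * unfold beta. replace (q*(1+P-kap) - r) with (-r + (1+P-kap)*q) by ring. rewrite gam_per. apply gam_mr.
      * unfold beta. replace (q*(1+P-kap) - r + q) with (-r + (2+P-kap)*q) by ring. rewrite gam_per. apply gam_mr.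
      * intros l Hl. unfold beta. apply reflQ. lia.
      * apply lt_IZR. rewrite HA2. nra.
      * rewrite !IZR_sq, HA2, <- HA. unfold Nneg.
        assert (0 < IZR q ^ 2 * (x + p + 1))%R by (apply Rmult_lt_0_compat; nra). split; nra.
      * exact Hs.
      * assert (E : sig mu = 2*beta + q - 1 - nu).
        { unfold sig. fold nu. unfold rhoQ. rewrite (div_eq_k q (1 + P - kap) (nu + r)) by (unfold beta in *; lia). unfold beta. ring. }
        rewrite E.
        replace (Npos (p - -1) (x + p - -1)) with (IZR ((r + 2*beta)^2 + (r + 2*beta + 2*q)^2) - Nneg p x)%R.
        exact Hs'.
        rewrite plus_IZR, !IZR_sq, HA2, <- HA. unfold Npos, Nneg. ring.
    + right. split; [lra|]. exists mu. split; [exact Ho|].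
      replace (Nneg (p - -1) (x + p - -1)) with (Nneg p x) by (unfold Nneg; ring). exact Hs.
Qed.


Lemma energy_bound (p x E : R) :
  ((0 < x)%R /\ (Npos p x <= E)%R) \/ ((x < 0)%R /\ (Nneg p x <= E)%R) ->
  (Rabs x <= E)%R /\ (Rabs p <= E + 1)%R.
Proof.
  pose proof Qpos as HQ. assert (HQ2 : (1 <= IZR q ^ 2)%R) by nra.
  intros [[Hx HE]|[Hx HE]]; unfold Npos, Nneg in HE.
  - assert (A1 : (0 <= (IZR q * (1 - 2 * p)) ^ 2)%R) by apply pow2_ge_0.
    assert (A0 : (0 <= (1 - 2 * p) ^ 2)%R) by apply pow2_ge_0.
    assert (A2 : ((1 - 2*p)^2 <= (IZR q * (1 - 2 * p)) ^ 2)%R).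
    { replace ((IZR q * (1 - 2 * p)) ^ 2)%R with (IZR q ^ 2 * (1 - 2*p)^2)%R by ring. nra. }
    split.
    + rewrite Rabs_right by lra. nra.
    + destruct (Rle_dec 0 p); [rewrite Rabs_right by lra|rewrite Rabs_left by lra]; nra.
  - assert (A1 : (0 <= (IZR q * (2 * p + 1)) ^ 2)%R) by apply pow2_ge_0.
    assert (A0 : (0 <= (2 * p + 1) ^ 2)%R) by apply pow2_ge_0.
    assert (A2 : ((2*p + 1)^2 <= (IZR q * (2*p+1)) ^ 2)%R).
    { replace ((IZR q * (2*p+1)) ^ 2)%R with (IZR q ^ 2 * (2*p+1)^2)%R by ring. nra. }
    split.
    + rewrite Rabs_left by lra. nra.
    + destruct (Rle_dec 0 p); [rewrite Rabs_right by lra|rewrite Rabs_left by lra]; nra.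
Qed.

Definition Emax (mu0 : Z) : Z := (2*q + 2*(mu0 + 4*q*q + q + 1))^2 + 8*q*q*q.

Lemma orb_range mu0 mu : Orb mu0 mu -> mu0 - 4*q*q <= mu <= mu0 + 4*q*q.
Proof. intros [t ->]. pose proof (iter_bound t mu0). lia. Qed.

Lemma xi_le_Emax mu0 nu : 0 <= nu <= mu0 + 4*q*q + q + 1 -> xi nu <= Emax mu0.
Proof.
  intros H. pose proof (xi_upper nu ltac:(lia)). unfold Emax.
  assert (0 <= r + 2*nu <= 2*q + 2*(mu0 + 4*q*q + q + 1)) by lia. nia.
Qed.

Lemma good_bound mu0 p x :
  (forall mu, Orb mu0 mu -> Mbig + q <= mu) -> GoodS mu0 p x ->
  (Rabs x <= IZR (Emax mu0))%R /\ (Rabs p <= IZR (Emax mu0) + 1)%R.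
Proof.
  intros Horb HG. apply energy_bound.
  destruct HG as [[Hx [mu [Ho [_ Hs]]]]|[Hx [mu [Ho [_ Hs]]]]].
  - left. split; auto. eapply Rle_trans; [exact Hs|]. apply IZR_le.
    pose proof (Horb mu Ho). pose proof (orb_range _ _ Ho). apply xi_le_Emax.
    unfold Mbig in *. nia.
  - right. split; auto. eapply Rle_trans; [exact Hs|]. apply IZR_le.
    pose proof (Horb mu Ho). pose proof (orb_range _ _ Ho). pose proof (rhoP_bound mu). apply xi_le_Emax.
    unfold Mbig in *. nia.
Qed.

Lemma slot_exists (N : R) (mul : Z) : M0 <= mul -> (IZR (xi mul) <= N)%R ->
  exists mu, mul <= mu /\ InSlot N mu.
Proof.
  intros Hm HN.
  assert (search : forall n : nat, (N < IZR (xi (mul + Z.of_nat n)))%R -> exists mu, mul <= mu /\ InSlot N mu).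
  { induction n; intros Hlt.
    - exfalso. rewrite Z.add_0_r in Hlt. lra.
    - destruct (Rlt_dec N (IZR (xi (mul + Z.of_nat n)))) as [H|H].
      + apply IHn; auto.
      + exists (mul + Z.of_nat n). split; [lia|]. unfold InSlot. split; [lra|].
        rewrite Nat2Z.inj_succ in Hlt. replace (mul + Z.succ (Z.of_nat n)) with (mul + Z.of_nat n + 1) in Hlt by lia. lra. }
  destruct (archimed N) as [HK _].
  set (K := up N) in *.
  set (nu := Z.max mul (Z.max K (M0 + 1))).
  apply (search (Z.to_nat (nu - mul))).
  rewrite Z2Nat.id by lia. replace (mul + (nu - mul)) with nu by ring.
  assert (nu <= xi nu).
  { pose proof (xi_lower nu ltac:(unfold M0 in *; lia)). unfold M0 in *. nia. }
  assert (K <= nu) by lia.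
  apply IZR_le in H. apply IZR_le in H0. lra.
Qed.

Lemma orbit_step n : orbit pp x1 (S n) =
  ((fst (orbit pp x1 n) - sgn (snd (orbit pp x1 n)))%R,
   (snd (orbit pp x1 n) + fst (orbit pp x1 n) - sgn (snd (orbit pp x1 n)))%R).
Proof. simpl. destruct (orbit pp x1 n). reflexivity. Qed.

Definition mun : Z := Mbig + 2*q + 4*q*q.

Theorem eventually_bounded :
  (forall n, snd (orbit pp x1 n) <> 0%R) ->
  exists n0 B, forall n, (n0 <= n)%nat ->
    (Rabs (fst (orbit pp x1 n)) <= B)%R /\ (Rabs (snd (orbit pp x1 n)) <= B)%R.
Proof.
  intros Hnz.
  set (Nb := IZR (xi mun)).
  destruct (classic (exists n, ((0 < snd (orbit pp x1 n))%R /\ (Nb <= Npos (fst (orbit pp x1 n)) (snd (orbit pp x1 n)))%R) \/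
                              ((snd (orbit pp x1 n) < 0)%R /\ (Nb <= Nneg (fst (orbit pp x1 n)) (snd (orbit pp x1 n)))%R)))
    as [[n Hn]|Hno].
  - assert (HM : M0 <= mun) by (unfold mun, Mbig, M0; nia).
    assert (Hstart : exists mu0, (forall mu, Orb mu0 mu -> Mbig + q <= mu) /\ GoodS mu0 (fst (orbit pp x1 n)) (snd (orbit pp x1 n))).
    { destruct Hn as [[Hx HN]|[Hx HN]].
      - destruct (slot_exists _ mun HM HN) as [mu [Hmu Hs]].
        exists mu. split.
        + intros m Hm. pose proof (orb_range _ _ Hm). unfold mun in *. lia.
        + left. split; auto. exists mu. split; auto. exists 0%nat. reflexivity.
      - destruct (slot_exists _ mun HM HN) as [mu [Hmu Hs]].
        exists (rhoP mu). split.
        + intros m Hm. pose proof (orb_range _ _ Hm). pose proof (rhoP_bound mu). unfold mun in *. lia.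
        + right. split; auto. exists (rhoP mu). split; [exists 0%nat; reflexivity|]. rewrite rhoP_inv. auto. }
    destruct Hstart as [mu0 [Horb HG]].
    assert (Hall : forall d, GoodS mu0 (fst (orbit pp x1 (n + d))) (snd (orbit pp x1 (n + d)))).
    { induction d.
      - rewrite Nat.add_0_r. auto.
      - replace (n + S d)%nat with (S (n + d)) by lia.
        rewrite orbit_step.
        assert (Hp : fst (orbit pp x1 (n + d)) = (pp + IZR (fst (zorb (n+d))))%R) by (rewrite orbit_zorb; reflexivity).
        simpl fst; simpl snd.
        pose proof (good_step mu0 (fst (zorb (n+d))) (snd (orbit pp x1 (n + d))) Horb) as Hgs.
        cbv zeta in Hgs. rewrite <- Hp in Hgs. apply Hgs.
        + apply Hnz.
        + pose proof (Hnz (S (n + d))). rewrite orbit_step in H. simpl snd in H. exact H.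
        + exact IHd. }
    exists n, (IZR (Emax mu0) + 1)%R. intros m Hm.
    replace m with (n + (m - n))%nat by lia.
    destruct (good_bound _ _ _ Horb (Hall (m - n)%nat)). split; lra.
  - exists 0%nat, (Nb + 1)%R. intros m _.
    assert (HE : ((0 < snd (orbit pp x1 m))%R /\ (Npos (fst (orbit pp x1 m)) (snd (orbit pp x1 m)) <= Nb)%R) \/
                 ((snd (orbit pp x1 m) < 0)%R /\ (Nneg (fst (orbit pp x1 m)) (snd (orbit pp x1 m)) <= Nb)%R)).
    { pose proof (Hnz m). destruct (Rlt_dec 0 (snd (orbit pp x1 m))).
      - left. split; auto. apply Rnot_lt_le. intro Hc. apply Hno. exists m. left. split; lra.
      - right. split; [lra|]. apply Rnot_lt_le. intro Hc. apply Hno. exists m. right. split; lra. }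
    destruct (energy_bound _ _ _ HE). split; lra.
Qed.

Lemma orbit_inj i j : orbit pp x1 (S i) = orbit pp x1 (S j) -> orbit pp x1 i = orbit pp x1 j.
Proof.
  rewrite !orbit_step. intros E. injection E as E1 E2.
  destruct (orbit pp x1 i) as [p x], (orbit pp x1 j) as [p' x']. simpl in *.
  assert (x = x') by lra. subst x'. f_equal. lra.
Qed.

Lemma back_to_zero i j : (i < j)%nat -> orbit pp x1 i = orbit pp x1 j ->
  exists k, (1 <= k)%nat /\ orbit pp x1 k = orbit pp x1 0.
Proof.
  revert j. induction i; intros j Hij E.
  - exists j. split; [lia|auto].
  - destruct j; [lia|]. apply (IHi j); [lia|]. apply orbit_inj; auto.
Qed.

Theorem periodic :
  (forall n, snd (orbit pp x1 n) <> 0%R) ->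
  exists k, (1 <= k)%nat /\ orbit pp x1 k = orbit pp x1 0.
Proof.
  intros Hnz. destruct (eventually_bounded Hnz) as [n0 [B HB]].
  pose proof IZRb_nz as Hb0.
  set (K := up (B + Rabs pp + IZR b * (B + Rabs x1))).
  destruct (archimed (B + Rabs pp + IZR b * (B + Rabs x1))) as [HK _]. fold K in HK.
  assert (Hbnd : forall n, (n0 <= n)%nat -> Z.abs (fst (zorb n)) < K /\ Z.abs (snd (zorb n)) < K).
  { intros n Hn. destruct (HB n Hn) as [H1 H2]. rewrite orbit_zorb in H1, H2. simpl in H1, H2.
    assert (HB0 : (0 <= B)%R) by (eapply Rle_trans; [apply Rabs_pos|exact H1]).
    assert (Hbp : (1 <= IZR b)%R) by (apply IZR_le; lia).
    split; apply lt_IZR; rewrite abs_IZR.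
    - replace (IZR (fst (zorb n))) with ((pp + IZR (fst (zorb n))) - pp)%R by ring.
      eapply Rle_lt_trans; [apply Rabs_triang|]. rewrite Rabs_Ropp.
      assert (0 <= IZR b * (B + Rabs x1))%R by (apply Rmult_le_pos; [lra|pose proof (Rabs_pos x1); lra]).
      lra.
    - replace (IZR (snd (zorb n))) with (IZR b * ((x1 + IZR (snd (zorb n)) / IZR b) - x1))%R by (field; auto).
      rewrite Rabs_mult, (Rabs_right (IZR b)) by lra.
      assert (Rabs (x1 + IZR (snd (zorb n)) / IZR b - x1) <= B + Rabs x1)%R.
      { eapply Rle_trans; [apply Rabs_triang|]. rewrite Rabs_Ropp. lra. }
      assert (IZR b * Rabs (x1 + IZR (snd (zorb n)) / IZR b - x1) <= IZR b * (B + Rabs x1))%R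
        by (apply Rmult_le_compat_l; lra).
      pose proof (Rabs_pos pp). lra. }
  set (M := Z.to_nat ((2*K+1)*(2*K+1))).
  set (g := fun i => Z.to_nat ((fst (zorb (n0 + i)) + K) * (2*K+1) + (snd (zorb (n0 + i)) + K))).
  destruct (php_nat M g) as [i [j [Hij Hg]]].
  { intros i Hi. unfold g, M. destruct (Hbnd (n0 + i)%nat ltac:(lia)).
    apply Z2Nat.inj_lt; nia. }
  unfold g in Hg. destruct (Hbnd (n0 + i)%nat ltac:(lia)), (Hbnd (n0 + j)%nat ltac:(lia)).
  apply Z2Nat.inj in Hg; try nia.
  apply div_pair in Hg; try lia.
  destruct Hg as [E1 E2].
  apply (back_to_zero (n0 + i) (n0 + j)); [lia|].
  rewrite !orbit_zorb. f_equal; f_equal; f_equal; [|f_equal]; lia.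
Qed.

End Slots.

Open Scope R_scope.
Open Scope R_scope.

Lemma core (a b q c : Z) (x1 : R) :
  (0 < b)%Z -> (0 < q)%Z -> (2*q = c*b)%Z ->
  (exists u v, u*(2*(q - c*a)) + v*q = 1)%Z ->
  (forall n : nat, snd (orbit (IZR a / IZR b) x1 n) <> 0) ->
  exists k : nat, (1 <= k)%nat /\ orbit (IZR a / IZR b) x1 k = orbit (IZR a / IZR b) x1 0.
Proof.
  intros Hb Hq Hcb [u [v Huv]] Hnz.
  set (r := ((q - c*a) mod (2*q))%Z).
  set (kap := ((q - c*a) / (2*q))%Z).
  assert (Hk : (q - c*a = r + 2*q*kap)%Z).
  { unfold r, kap. pose proof (Z.div_mod (q - c*a) (2*q) ltac:(lia)). lia. }
  assert (Hr : (0 <= r < 2*q)%Z) by (unfold r; apply Z.mod_pos_bound; lia).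
  apply (periodic q r u (v + 4*u*kap) Hq Hr) with (c := c) (kap := kap); auto.
  rewrite <- Huv. rewrite Hk. ring.
Qed.

Theorem mainTheorem5 (a b : Z) (x1 : R) :
  (0 < b)%Z ->
  Zis_gcd a b 1%Z ->
  (Z.modulo b 4 <> 0)%Z ->
  (forall n : nat, snd (orbit (IZR a / IZR b) x1 n) <> 0) ->
  exists k : nat, (1 <= k)%nat /\
    orbit (IZR a / IZR b) x1 k = orbit (IZR a / IZR b) x1 0.
Proof.
  intros Hb Hg H4 Hnz.
  destruct (Zis_gcd_bezout _ _ _ Hg) as [al be Hab].
  pose proof (Z.div_mod b 4 ltac:(lia)) as Hd. pose proof (Z.mod_pos_bound b 4 ltac:(lia)) as Hm.
  set (t := (b / 4)%Z) in *. set (s := (b mod 4)%Z) in *.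
  assert (Hs : (s = 1 \/ s = 2 \/ s = 3)%Z) by lia.
  destruct Hs as [Hs|[Hs|Hs]].
  -
    apply (core a b b 2 x1 Hb); [lia|lia| |exact Hnz].
    set (m := (2*t)%Z).
    exists (- (m*m*al))%Z, (- (b - 2 - 2*m*m*al - 4*m*m*be))%Z.
    assert (Hbm : (b = 2*m + 1)%Z) by (unfold m; lia).
    assert (E : (4*m*m*al*a = 4*m*m*(1 - be*b))%Z) by (rewrite <- Hab; ring).
    rewrite Hbm in *. nia.
  -
    apply (core a b (2*t+1) 1 x1 Hb); [lia|lia| |exact Hnz].
    set (q := (2*t+1)%Z). set (m := t).
    exists (m*al)%Z, (-(2*m*al - 1 + 4*m*be))%Z.
    assert (Hbq : (b = 2*q)%Z) by (unfold q; lia).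
    assert (E : (2*m*al*a = 2*m*(1 - be*b))%Z) by (rewrite <- Hab; ring).
    rewrite Hbq in E. unfold q, m in *. nia.
  - apply (core a b b 2 x1 Hb); [lia|lia| |exact Hnz].
    set (m := (2*t + 1)%Z).
    exists (- (m*m*al))%Z, (- (b - 2 - 2*m*m*al - 4*m*m*be))%Z.
    assert (Hbm : (b = 2*m + 1)%Z) by (unfold m; lia).
    assert (E : (4*m*m*al*a = 4*m*m*(1 - be*b))%Z) by (rewrite <- Hab; ring).
    rewrite Hbm in *. nia.
Qed.
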